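(* Let $(|B(\lambda)\rangle,\mathcal{M})$ be an $N$-regular quantum scenario. For any $z_0,z_1\in\{0,1\}$, the linear system $\Psi_0(z_0)\cup\Psi_1(z_1)$ over $\mathbb{Z}_2$ is inconsistent if and only if $\bigoplus_{j=0}^{N-1}r(j,0,z_0)\neq\bigoplus_{j=0}^{N-1}r(j,1,z_1)$.
   Context: $\equiv$ is equality modulo $2\pi$; $\oplus$ is addition mod 2. For $\varphi\in\mathbb{R}$, $E_\varphi=\cos\varphi X+\sin\varphi Y$, with $+1$ eigenvector $|\varphi\rangle=\frac{1}{\sqrt2}(|0\rangle+e^{i\varphi}|1\rangle)$ and $-1$ eigenvector $|\varphi+\pi\rangle$; outcomes $+1,-1$ relabelled $0,1$; measurements identified with angles. A measurement scenario $\mathcal{M}=(M_1,M_2,M_3)$ consists of finite sets $M_i\subseteq[0,\pi)$ of angles for qubit $i$. For a three-qubit state $|\psi\rangle$, the event $(A,B,C)\to(a,b,c)$ is impossible if $(\langle A+a\pi|\otimes\langle B+b\pi|\otimes\langle C+c\pi|)|\psi\rangle=0$. For $\lambda\in[0,\frac{\pi}{2})$, $|v_\lambda\rangle=\cos\frac{\lambda}{2}|0\rangle+\sin\frac{\lambda}{2}|1\rangle$, $|w_\lambda\rangle=\sin\frac{\lambda}{2}|0\rangle+\cos\frac{\lambda}{2}|1\rangle$, $|B(\lambda)\rangle=\frac{1}{\sqrt2}(|00\rangle|v_\lambda\rangle+|11\rangle|w_\lambda\rangle)$. Define modulo $2\pi$: $\beta(\lambda,\varphi)=\varphi-2\arctan\left(\frac{\cos\frac{\lambda}{2}\sin\varphi}{\sin\frac{\lambda}{2}+\cos\frac{\lambda}{2}\cos\varphi}\right)$.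 For $|B(\lambda)\rangle$, the event $(A,B,C)\to(a,b,c)$ is impossible iff $A+B\equiv\beta(\lambda,C+c\pi)+(1\oplus a\oplus b)\pi$. $(|B(\lambda)\rangle,\mathcal{M})$ is maximally impossible if for every $C\in M_3$ and $z\in\{0,1\}$: every $A\in M_1$ admits $B\in M_2$, $a,b$ with $(A,B,C)\to(a,b,z)$ impossible, and every $B\in M_2$ admits $A\in M_1$, $a,b$ with $(A,B,C)\to(a,b,z)$ impossible. In that case $|M_1|=|M_2|=:N$; write $M_1=\{A_0,\dots,A_{N-1}\}$, $M_2=\{B_0,\dots,B_{N-1}\}$, $M_3=\{C_0,\dots,C_{n-1}\}$; for each $(j,l,z)$ there is a unique $k=:K(j,l,z)$ such that $A_j+B_k-\beta(\lambda,C_l+z\pi)$ is an integer multiple of $\pi$, and $r(j,l,z)\in\{0,1\}$ is defined by $A_j+B_{K(j,l,z)}-\beta(\lambda,C_l+z\pi)\equiv r(j,l,z)\pi$. $\Psi_l(z)$ denotes the system of $\mathbb{Z}_2$-linear equations $\{a_j\oplus b_{K(j,l,z)}=r(j,l,z):j=0,\dots,N-1\}$ in unknowns $a_0,\dots,a_{N-1},b_0,\dots,b_{N-1}$. With $n=2$, the scenario has maximal rank if for all $z_0,z_1$ the coefficient matrix of $\Psi_0(z_0)\cup\Psi_1(z_1)$ has rank $2N-1$ over $\mathbb{Z}_2$. The scenario is $N$-regular if it is maximally impossible and of maximal rank, with $|M_1|=|M_2|=N$ and $M_3=\{C_0,C_1\}$. *)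

(* Defs.v *)
From Stdlib Require Import Reals ZArith.
From Coquelicot Require Import Complex.
From mathcomp Require Import all_boot all_algebra.

Set Implicit Arguments.
Unset Strict Implicit.
Unset Printing Implicit Defensive.

Local Open Scope R_scope.

Definition eqm2pi (x y : R) : Prop := exists k : Z, x - y = 2 * IZR k * PI.

Definition int_mult_pi (x : R) : Prop := exists k : Z, x = IZR k * PI.

Definition bitR (b : bool) : R := if b then 1 else 0.

Definition expi (t : R) : C := (cos t, sin t).

(* coefficients of the bra <phi| = (1/sqrt2)(<0| + e^{-i phi} <1|) *)
Definition bra0 (phi : R) : C := RtoC (/ sqrt 2).
Definition bra1 (phi : R) : C := Cmult (expi (- phi)) (RtoC (/ sqrt 2)).

(* (<al| (x) <be| (x) <ga|) |B(lam)>, with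
   |B(lam)> = (1/sqrt2)(|00>|v_lam> + |11>|w_lam>),
   v_lam = cos(lam/2)|0> + sin(lam/2)|1>, w_lam = sin(lam/2)|0> + cos(lam/2)|1> *)
Definition amplitudeB (lam al be ga : R) : C :=
  Cmult (RtoC (/ sqrt 2))
   (Cplus
     (Cmult (Cmult (bra0 al) (bra0 be))
        (Cplus (Cmult (bra0 ga) (RtoC (cos (lam / 2))))
               (Cmult (bra1 ga) (RtoC (sin (lam / 2))))))
     (Cmult (Cmult (bra1 al) (bra1 be))
        (Cplus (Cmult (bra0 ga) (RtoC (sin (lam / 2))))
               (Cmult (bra1 ga) (RtoC (cos (lam / 2))))))).

Definition impossible (lam A B C : R) (a b c : bool) : Prop :=
  amplitudeB lam (A + bitR a * PI) (B + bitR b * PI) (C + bitR c * PI) = RtoC 0.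

(* beta(lam, phi) = phi - 2 arctan( cos(lam/2) sin phi / (sin(lam/2) + cos(lam/2) cos phi) ),
   read modulo 2 pi; when the denominator vanishes, 2 arctan(+-oo) = +-pi == pi (mod 2pi). *)
Definition beta (lam phi : R) : R :=
  let den := sin (lam / 2) + cos (lam / 2) * cos phi in
  if Req_EM_T den 0 then phi - PI
  else phi - 2 * atan (cos (lam / 2) * sin phi / den).

Definition max_impossible (N1 N2 n : nat) (lam : R)
  (A : 'I_N1 -> R) (B : 'I_N2 -> R) (C : 'I_n -> R) : Prop :=
  forall (l : 'I_n) (z : bool),
    (forall j, exists k a b, impossible lam (A j) (B k) (C l) a b z) /\
    (forall k, exists j a b, impossible lam (A j) (B k) (C l) a b z).

Definition is_K_r (N : nat) (lam : R) (A B : 'I_N -> R) (C : 'I_2 -> R)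
  (K : 'I_N -> 'I_2 -> bool -> 'I_N) (r : 'I_N -> 'I_2 -> bool -> bool) : Prop :=
  forall j l z,
    eqm2pi (A j + B (K j l z) - beta lam (C l + bitR z * PI)) (bitR (r j l z) * PI).

Local Close Scope R_scope.

Local Open Scope ring_scope.

(* Coefficient matrix of Psi_0(z0) u Psi_1(z1): rows 0..N-1 are the equations
   a_j + b_{K(j,0,z0)} of Psi_0(z0), rows N..2N-1 those of Psi_1(z1);
   columns 0..N-1 are the unknowns a_0..a_{N-1}, columns N..2N-1 are b_0..b_{N-1}. *)
Definition coefmx (N : nat) (K : 'I_N -> 'I_2 -> bool -> 'I_N) (z0 z1 : bool)
  : 'M['F_2]_(N + N, N + N) :=
  \matrix_(i, x)
    let: (j, l, z) := match split i with
                      | inl j => (j, (ord0 : 'I_2), z0)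
                      | inr j => (j, (ord_max : 'I_2), z1) end in
    match split x with
    | inl j' => (j' == j)%:R
    | inr k' => (k' == K j l z)%:R
    end.

Definition max_rank (N : nat) (K : 'I_N -> 'I_2 -> bool -> 'I_N) : Prop :=
  forall z0 z1 : bool, (\rank (coefmx K z0 z1)).+1 = (2 * N)%N.

Definition consistent (N : nat) (K : 'I_N -> 'I_2 -> bool -> 'I_N)
  (r : 'I_N -> 'I_2 -> bool -> bool) (z0 z1 : bool) : Prop :=
  exists a b : 'I_N -> bool,
    (forall j, addb (a j) (b (K j ord0 z0)) = r j ord0 z0) /\
    (forall j, addb (a j) (b (K j ord_max z1)) = r j ord_max z1).

Local Close Scope ring_scope.

(* Main.v *)
Require Import Defs.
From Stdlib Require Import Reals ZArith Lra Lia.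
From Coquelicot Require Import Complex.
From mathcomp Require Import all_boot all_algebra zify.

Local Open Scope R_scope.

Lemma key_alg c s cg sg e1 e2 : cg*cg + sg*sg = 1 ->
  c + s * cg + e1 * (s + c * cg) - e2 * (c * sg) = 0 ->
  - s * sg - e1 * (c * sg) - e2 * (s + c * cg) = 0 ->
  (e2 * cg - e1 * sg) * ((s + c*cg)^2 - (c*sg)^2) + (e1 * cg + e2 * sg) * (2 * (s + c*cg) * (c*sg)) = 0.
Proof.
  intros H0 H1 H2.
  assert (HQ : (s + c*cg) * cg + (c*sg) * sg = c + s*cg).
  { transitivity (s*cg + c*(cg*cg+sg*sg)); [ring| rewrite H0; ring]. }
  set (X := s + c*cg) in *. set (Y := c*sg) in *.
  assert (HP1 : e1 * X - e2 * Y = - (X * cg + Y * sg)) by lra.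
  assert (HP2 : e1 * Y + e2 * X = Y * cg - X * sg) by (unfold X, Y in *; lra).
  replace ((e2 * cg - e1 * sg) * (X ^ 2 - Y ^ 2) + (e1 * cg + e2 * sg) * (2 * X * Y))
    with ((e1 * X - e2 * Y) * (Y * cg - X * sg) + (e1 * Y + e2 * X) * (X * cg + Y * sg)) by ring.
  rewrite HP1 HP2; ring.
Qed.

Lemma sin_key lam th ga : 0 <= lam < PI/2 ->
  cos (lam/2) + sin (lam/2) * cos ga + cos th * (sin (lam/2) + cos (lam/2) * cos ga)
    - sin th * (cos (lam/2) * sin ga) = 0 ->
  - sin (lam/2) * sin ga - cos th * (cos (lam/2) * sin ga)
    - sin th * (sin (lam/2) + cos (lam/2) * cos ga) = 0 ->
  sin (th - beta lam ga) = 0.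
Proof.
  intros Hl H1 H2.
  assert (Hcs2 : cos ga * cos ga + sin ga * sin ga = 1) by (pose proof (sin2_cos2 ga); unfold Rsqr in *; lra).
  pose proof (key_alg _ _ _ _ _ _ Hcs2 H1 H2) as HK.
  unfold beta; cbv zeta.
  set (c := cos (lam/2)) in *. set (s := sin (lam/2)) in *.
  destruct (Req_EM_T _ _) as [HX|HX]; cbn [is_left].
  - replace (th - (ga - PI)) with ((th - ga) + PI) by ring.
    rewrite sin_plus sin_PI cos_PI sin_minus.
    assert (Hsg : sin ga <> 0).
    { intro Hs. assert (Hc2 : cos ga ^ 2 = 1) by (pose proof (sin2_cos2 ga); unfold Rsqr in *; nra).
      assert (Hcl : 0 < cos lam) by (apply cos_gt_0; lra).
      assert (Hcl2 : cos lam = c*c - s*s).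
      { unfold c, s. replace lam with (lam/2 + lam/2) at 1 by field. rewrite cos_plus. ring. }
      assert (s * s = c * c) by nra. lra. }
    assert (Hc : 0 < c) by (apply cos_gt_0; lra).
    assert (Hcs : c * sin ga <> 0) by (apply Rmult_integral_contrapositive; split; lra).
    rewrite HX in H1 H2.
    assert (E1 : sin th = sin ga) by (apply (Rmult_eq_reg_r (c * sin ga)); nra).
    assert (E2 : cos th = cos ga) by (apply (Rmult_eq_reg_r (c * sin ga)); nra).
    rewrite E1 E2; ring.
  - set (X := s + c * cos ga) in *. set (Y := c * sin ga) in *.
    set (t := Y / X). set (phi := atan t).
    assert (Hcp : 0 < cos phi).
    { unfold phi; rewrite cos_atan. apply Rdiv_lt_0_compat; [lra|]. apply sqrt_lt_R0.
      pose proof (Rle_0_sqr t); lra. }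
    assert (Hsp : sin phi = t * cos phi).
    { pose proof (tan_atan t) as Ht. fold phi in Ht. unfold tan in Ht.
      rewrite <- Ht. field. lra. }
    replace (th - (ga - 2 * phi)) with ((th - ga) + (phi + phi)) by ring.
    rewrite sin_plus cos_plus sin_plus (sin_minus th) (cos_minus th) Hsp.
    apply (Rmult_eq_reg_r (X^2)); [| apply pow_nonzero; exact HX].
    rewrite Rmult_0_l.
    replace 0 with (cos phi * cos phi * 0) by ring.
    rewrite <- HK. unfold t. field. exact HX.
Qed.

Lemma amp_re lam al be ga :
  fst (amplitudeB lam al be ga) =
  (/ sqrt 2)^4 * (cos (lam/2) + sin (lam/2) * cos ga
    + (cos al * cos be - sin al * sin be) * (sin (lam/2) + cos (lam/2) * cos ga)
    - (sin al * cos be + cos al * sin be) * (cos (lam/2) * sin ga)).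
Proof. unfold amplitudeB, bra0, bra1, expi, RtoC; simpl; rewrite !cos_neg !sin_neg; ring. Qed.

Lemma amp_im lam al be ga :
  snd (amplitudeB lam al be ga) =
  (/ sqrt 2)^4 * (- sin (lam/2) * sin ga
    - (cos al * cos be - sin al * sin be) * (cos (lam/2) * sin ga)
    - (sin al * cos be + cos al * sin be) * (sin (lam/2) + cos (lam/2) * cos ga)).
Proof. unfold amplitudeB, bra0, bra1, expi, RtoC; simpl; rewrite !cos_neg !sin_neg; ring. Qed.

Lemma imp_mult lam A B C a b z : 0 <= lam < PI/2 -> impossible lam A B C a b z ->
  int_mult_pi (A + B - beta lam (C + bitR z * PI)).
Proof.
  intros Hl Hi. unfold impossible in Hi.
  set (al := A + bitR a * PI) in *. set (be := B + bitR b * PI) in *.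
  set (ga := C + bitR z * PI) in *.
  assert (Hq : (/ sqrt 2)^4 <> 0).
  { apply pow_nonzero. apply Rinv_neq_0_compat. apply Rgt_not_eq, sqrt_lt_R0. lra. }
  assert (Hr := f_equal fst Hi). assert (Hm := f_equal snd Hi).
  rewrite amp_re in Hr. rewrite amp_im in Hm. simpl in Hr, Hm.
  apply Rmult_integral in Hr. destruct Hr as [Hr|Hr]; [contradiction|].
  apply Rmult_integral in Hm. destruct Hm as [Hm|Hm]; [contradiction|].
  rewrite <- cos_plus in Hr, Hm. rewrite <- sin_plus in Hr, Hm.
  pose proof (sin_key lam (al + be) ga Hl Hr Hm) as HS.
  destruct (sin_eq_0_0 _ HS) as [k Hk].
  unfold al, be in Hk.
  destruct a, b; simpl in Hk.
  - exists (Z.sub k 2). rewrite minus_IZR. lra.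
  - exists (Z.sub k 1). rewrite minus_IZR. lra.
  - exists (Z.sub k 1). rewrite minus_IZR. lra.
  - exists k. lra.
Qed.

Lemma zero_of_mult (m : Z) : - PI < IZR m * PI < PI -> m = Z0.
Proof.
  intros [H1 H2]. pose proof PI_RGT_0.
  assert (-1 < IZR m) by (apply (Rmult_lt_reg_r PI); lra).
  assert (IZR m < 1) by (apply (Rmult_lt_reg_r PI); lra).
  apply lt_IZR in H0. apply lt_IZR in H3. lia.
Qed.

Lemma K_surj N lam (A B : 'I_N -> R) (C : 'I_2 -> R) K r :
  0 <= lam < PI/2 ->
  (forall k, 0 <= B k < PI) -> injective B ->
  max_impossible lam A B C -> is_K_r lam A B C K r ->
  forall l z k, exists j, K j l z = k.
Proof.
  intros Hl HB Binj Hmi HK l z k.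
  destruct ((proj2 (Hmi l z)) k) as [j [a [b Hi]]].
  exists j. apply Binj.
  destruct (imp_mult _ _ _ _ _ _ _ Hl Hi) as [m Hm].
  destruct (HK j l z) as [n Hn].
  set (bt := beta lam (C l + bitR z * PI)) in *.
  assert (E : B k - B (K j l z) = IZR (Z.sub (Z.sub m (Z.mul 2 n)) (if r j l z then Z.one else Z.zero)) * PI).
  { rewrite !minus_IZR mult_IZR. destruct (r j l z); simpl in Hn |- *; first [change (IZR Z.one) with 1 | change (IZR Z.zero) with 0]; lra. }
  pose proof (HB k). pose proof (HB (K j l z)).
  assert (Hlt : - PI < IZR (Z.sub (Z.sub m (Z.mul 2 n)) (if r j l z then Z.one else Z.zero)) * PI < PI) by (rewrite <- E; lra).
  rewrite (zero_of_mult _ Hlt) in E.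
  simpl in E. lra.
Qed.

Local Close Scope R_scope.
Import GRing.Theory.
Local Open Scope ring_scope.

Lemma surj_reindex N (f : 'I_N -> 'I_N) (T : Type) (idx : T) (op : Monoid.com_law idx) (F : 'I_N -> T) :
  (forall k, exists j, f j = k) ->
  \big[op/idx]_(j < N) F (f j) = \big[op/idx]_(j < N) F j.
Proof.
  move=> Hs.
  pose g k := odflt k [pick j | f j == k].
  have gK : cancel g f.
    move=> k; rewrite /g; case: pickP => [j /eqP //|H].
    by case: (Hs k) => j Hj; move: (H j); rewrite Hj eqxx.
  rewrite (reindex_inj (can_inj gK)) /=.
  by apply: eq_bigr => k _; rewrite gK.
Qed.

Definition b2F (b : bool) : 'F_2 := (b : nat)%:R.

Lemma b2F_add x y : b2F (addb x y) = b2F x + b2F y.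
Proof. by case: x; case: y; rewrite /b2F /= ?add0r ?addr0 //; apply/val_inj. Qed.

Lemma b2F_inj : injective b2F.
Proof. by case; case. Qed.

Lemma F2_cases (x : 'F_2) : x = b2F (x == 1).
Proof. by case: x => [[|[|]]] //= ?; apply/val_inj. Qed.

Lemma b2F_sum N (F : 'I_N -> bool) : b2F (\big[addb/false]_(j < N) F j) = \sum_(j < N) b2F (F j).
Proof. apply: (big_morph b2F b2F_add). by []. Qed.

Lemma sum_delta_F2 n (F : 'I_n -> 'F_2) j : \sum_(j' < n) F j' * (j' == j)%:R = F j.
Proof.
  rewrite (bigD1 j) //= eqxx mulr1 big1 ?addr0 // => i /negPf ->.
  by rewrite mulr0.
Qed.

Lemma sum_one n (j : 'I_n) : \sum_(i < n) ((j == i)%:R : 'F_2) = 1.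
Proof. by rewrite (bigD1 j) //= eqxx big1 ?addr0 // => i; rewrite eq_sym => /negPf ->. Qed.

Lemma split_l m n (i : 'I_m) : split (lshift n i) = inl i.
Proof. exact: (unsplitK (inl i)). Qed.
Lemma split_r m n (i : 'I_n) : split (rshift m i) = inr i.
Proof. exact: (unsplitK (inr i)). Qed.

Lemma coefmx_l N (K : 'I_N -> 'I_2 -> bool -> 'I_N) z0 z1 j x :
  coefmx K z0 z1 (lshift N j) x =
  match split x with inl j' => (j' == j)%:R | inr k' => (k' == K j ord0 z0)%:R end.
Proof. by rewrite mxE (unsplitK (inl j) : split (lshift N j) = inl j). Qed.

Lemma coefmx_r N (K : 'I_N -> 'I_2 -> bool -> 'I_N) z0 z1 j x :
  coefmx K z0 z1 (rshift N j) x =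
  match split x with inl j' => (j' == j)%:R | inr k' => (k' == K j ord_max z1)%:R end.
Proof. by rewrite mxE (unsplitK (inr j) : split (rshift N j) = inr j). Qed.

Lemma la_main N (K : 'I_N -> 'I_2 -> bool -> 'I_N) r z0 z1 :
  (forall l z k, exists j, K j l z = k) -> max_rank K ->
  ~ consistent K r z0 z1 <->
    \big[addb/false]_(j < N) r j ord0 z0 != \big[addb/false]_(j < N) r j ord_max z1.
Proof.
  move=> Hs Hr.
  have sumK : forall l z (G : 'I_N -> bool),
      \big[addb/false]_(j < N) G (K j l z) = \big[addb/false]_(j < N) G j.
    by move=> l z G; exact: (@surj_reindex N (fun j => K j l z) bool false _ G (Hs l z)).
  split; last first.
    move=> Hne [a [b [H0 H1]]]; move/negP: Hne; apply.
    rewrite -(eq_bigr _ (fun j _ => H0 j)) -(eq_bigr _ (fun j _ => H1 j)).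
    by rewrite !big_split /= !sumK.
  move=> Hnc; apply/negP => /eqP Heq; apply: Hnc.
  set M := coefmx K z0 z1.
  set on : 'cV['F_2]_(N + N) := const_mx 1.
  set rr : 'rV['F_2]_(N + N) := \row_i (match split i with
           inl j => b2F (r j ord0 z0) | inr j => b2F (r j ord_max z1) end).
  have HMo : M^T *m on = 0.
    apply/matrixP => x y; rewrite /M !mxE big_split_ord /=.
    under eq_bigr do rewrite [on _ _]mxE mulr1 [_^T _ _]mxE coefmx_l.
    under [X in _ + X]eq_bigr do rewrite [on _ _]mxE mulr1 [_^T _ _]mxE coefmx_r.
    case: (split x) => [j|k].
      by rewrite sum_one; apply/val_inj.
    rewrite (@surj_reindex N (fun i => K i ord0 z0) _ _ _ (fun i => (k == i)%:R) (Hs _ _)).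
    rewrite (@surj_reindex N (fun i => K i ord_max z1) _ _ _ (fun i => (k == i)%:R) (Hs _ _)).
    by rewrite sum_one; apply/val_inj.
  have Hrr : rr *m on = 0.
    apply/matrixP => x y; rewrite !mxE big_split_ord /=.
    under eq_bigr do rewrite !mxE split_l mulr1.
    under [X in _ + X]eq_bigr do rewrite !mxE split_r mulr1.
    by rewrite -!b2F_sum Heq -b2F_add addbb.
  have HN : (\rank M).+1 = (2 * N)%N by apply: Hr.
  have sub1 : (M^T <= kermx on)%MS by rewrite sub_kermx HMo.
  have NN : (0 < N + N)%N by lia.
  have on0 : \rank on != 0%N.
    rewrite mxrank_eq0; apply/eqP => H.
    have := congr1 (fun A : 'cV_(N+N) => A (Ordinal NN) 0) H; rewrite !mxE.
    by move/eqP; rewrite oner_eq0.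
  have on1 : (\rank on <= 1)%N by apply: rank_leq_col.
  have sub2 : (kermx on <= M^T)%MS.
    case: (mxrank_leqif_sup sub1) => _ <-.
    rewrite mxrank_ker mxrank_tr; apply/eqP. lia.
  have : (rr <= M^T)%MS by apply: submx_trans sub2; rewrite sub_kermx Hrr.
  case/submxP => u Hu.
  exists (fun j => u 0 (lshift N j) == 1), (fun k => u 0 (rshift N k) == 1).
  split => j; apply: b2F_inj; rewrite b2F_add -!F2_cases.
    have := congr1 (fun A : 'rV_(N+N) => A 0 (lshift N j)) Hu; rewrite /rr mxE split_l => ->.
    rewrite mxE big_split_ord /=.
    under eq_bigr do rewrite [_^T _ _]mxE /M coefmx_l split_l.
    under [X in _ = _ + X]eq_bigr do rewrite [_^T _ _]mxE /M coefmx_l split_r.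
    by rewrite !sum_delta_F2.
  have := congr1 (fun A : 'rV_(N+N) => A 0 (rshift N j)) Hu; rewrite /rr mxE split_r => ->.
  rewrite mxE big_split_ord /=.
  under eq_bigr do rewrite [_^T _ _]mxE /M coefmx_r split_l.
  under [X in _ = _ + X]eq_bigr do rewrite [_^T _ _]mxE /M coefmx_r split_r.
  by rewrite !sum_delta_F2.
Qed.
Local Close Scope ring_scope.

Theorem lemma16 (N : nat) (lam : R)
  (A B : 'I_N -> R) (C : 'I_2 -> R)
  (K : 'I_N -> 'I_2 -> bool -> 'I_N) (r : 'I_N -> 'I_2 -> bool -> bool) :
  Rle 0 lam /\ Rlt lam (Rdiv PI 2) ->
  (forall j, Rle 0 (A j) /\ Rlt (A j) PI) ->
  (forall k, Rle 0 (B k) /\ Rlt (B k) PI) ->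
  (forall l, Rle 0 (C l) /\ Rlt (C l) PI) ->
  injective A -> injective B -> injective C ->
  (* N-regular: maximally impossible and of maximal rank *)
  max_impossible lam A B C ->
  is_K_r lam A B C K r ->
  max_rank K ->
  forall z0 z1 : bool,
    ~ consistent K r z0 z1 <->
    \big[addb/false]_(j < N) r j ord0 z0 != \big[addb/false]_(j < N) r j ord_max z1.
Proof.
  intros Hl HA HB HC Ainj Binj Cinj Hmi HK Hr z0 z1.
  apply: la_main; last exact: Hr.
  exact: (@K_surj _ _ _ _ _ _ _ Hl HB Binj Hmi HK).
Qed.
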